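(* Let $k \geq 2$ be an integer and let $G$ be a $k$-connected $(K_2 \cup kK_1)$-free graph. Then $\alpha(G) \leq \frac{|V(G)|}{2}$ if and only if $G$ is $1$-tough. Moreover, if $G$ is $(k+1)$-connected and $(K_2 \cup kK_1)$-free, then $\alpha(G) < \frac{|V(G)|}{2}$ if and only if $t(G) > 1$.
   Context: All graphs are finite, undirected and simple. $\alpha(G)$ denotes the independence number and $\omega(H)$ the number of components of a graph $H$. For graphs $R, R'$, $R \cup R'$ is their disjoint union and $kR$ is the disjoint union of $k$ copies of $R$; $K_n$ is the complete graph on $n$ vertices. A graph $G$ is $R$-free if it contains no induced subgraph isomorphic to $R$. The toughness $t(G)$ is $\min\{|S|/\omega(G-S) : S \subset V(G),\ \omega(G-S) \geq 2\}$, or $t(G)=\infty$ if $G$ is complete; $G$ is $1$-tough if $t(G) \geq 1$. *)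

(* Defs.v *)
(* Simple graphs: symmetric irreflexive relation e on a finType T. *)
From mathcomp Require Import all_boot all_order all_algebra.
Set Implicit Arguments. Unset Strict Implicit. Unset Printing Implicit Defensive.
Import Order.TTheory GRing.Theory Num.Theory.

Section Graphs.
Variables (T : finType) (e : rel T).

Definition independent (A : {set T}) : bool :=
  [forall x in A, forall y in A, ~~ e x y].
Definition alpha : nat := \max_(A : {set T} | independent A) #|A|.

Definition del_rel (S : {set T}) : rel T :=
  [rel x y | [&& x \notin S, y \notin S & e x y]].

Definition components (S : {set T}) : {set {set T}} :=
  [set [set y | connect (del_rel S) x y] | x in ~: S].

Definition ncomp (S : {set T}) : nat := #|components S|.

Definition k_connected (k : nat) : Prop :=
  k < #|T| /\ forall S : {set T}, #|S| < k -> ncomp S = 1.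

Definition induced_free (R : finType) (r : rel R) : Prop :=
  ~ exists f : R -> T, injective f /\ forall x y, e (f x) (f y) = r x y.

(* toughness; None encodes +infinity (no S with omega(G - S) >= 2,
   i.e. G complete) *)
Definition omin (a b : option rat) : option rat :=
  match a, b with
  | None, _ => b
  | _, None => a
  | Some x, Some y => Some (Num.min x y)
  end.

Definition toughness : option rat :=
  \big[omin/None]_(S : {set T} | 2 <= ncomp S)
     Some ((#|S|%:R : rat) / (ncomp S)%:R)%R.

Definition one_tough : Prop :=
  match toughness with None => True | Some t => (1 <= t)%R end.
Definition tough_gt1 : Prop :=
  match toughness with None => True | Some t => (1 < t)%R end.

End Graphs.

Definition K2_kK1_rel (k : nat) : rel ('I_2 + 'I_k)%type :=
  fun x y => match x, y with inl a, inl b => a != b | _, _ => false end.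
Arguments K2_kK1_rel k : clear implicits.

(* Main.v *)
Require Import Defs.
From mathcomp Require Import all_boot all_order all_algebra.
From mathcomp Require Import zify.
Import Order.TTheory GRing.Theory Num.Theory.
Set Implicit Arguments. Unset Strict Implicit.

Section G.
Variables (T : finType) (e : rel T) (esym : symmetric e) (eirr : irreflexive e).

Lemma del_sym S : symmetric (del_rel e S).
Proof. by move=> x y; rewrite /del_rel /= (esym x y) andbCA. Qed.

Lemma comp_same (S : {set T}) (C1 C2 : {set T}) (u v : T) : C1 \in components e S -> C2 \in components e S ->
  u \in C1 -> v \in C2 -> connect (del_rel e S) u v -> C1 = C2.
Proof.
move=> /imsetP[x1 _ ->] /imsetP[x2 _ ->]; rewrite !inE => h1 h2 huv.
have cs := sym_connect_sym (del_sym S).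
have h12 : connect (del_rel e S) x1 x2.
  by apply: connect_trans (connect_trans h1 huv) _; rewrite cs.
by apply/setP=> z; rewrite !inE (same_connect cs h12).
Qed.

Lemma comp_mem (S : {set T}) (x : T) : x \notin S -> [set y | connect (del_rel e S) x y] \in components e S.
Proof. by move=> hx; apply/imsetP; exists x; rewrite ?inE. Qed.

Lemma no_edge k (S : {set T}) (x y : T) : induced_free e (K2_kK1_rel k) -> k < ncomp e S ->
  x \notin S -> y \notin S -> e x y = false.
Proof.
move=> hfree hc hx hy; apply/negbTE/negP => exy; apply: hfree.
pose Cx := [set z | connect (del_rel e S) x z].
have CxC : Cx \in components e S by exact: comp_mem.
have xCx : x \in Cx by rewrite inE connect0.
have yCx : y \in Cx by rewrite inE; apply: connect1; rewrite /del_rel /= hx hy.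
pose D := components e S :\ Cx.
have hD : k <= #|D|.
  by move: hc; rewrite /ncomp (cardsD1 Cx) CxC.
pose s := enum D.
have ss : k <= size s by rewrite -cardE.
have us : uniq s := enum_uniq _.
pose comp (i : 'I_k) := nth set0 s i.
have compD i : comp i \in D.
  by rewrite -mem_enum; apply: mem_nth; apply: leq_trans (ltn_ord i) ss.
have ex i : exists z, (z \in comp i) && (z \notin S).
  have := compD i; rewrite inE => /andP[_ /imsetP[z]]; rewrite inE => hz ->.
  by exists z; rewrite inE connect0 hz.
pose rep i := odflt x [pick z | (z \in comp i) && (z \notin S)].
have repP i : (rep i \in comp i) && (rep i \notin S).
  rewrite /rep; case: pickP => [z //|] h.
  by have [z hz] := ex i; rewrite h in hz.
have compC i : comp i \in components e S by have /setD1P[] := compD i.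
have compNx i : comp i != Cx by have /setD1P[] := compD i.
have compinj i j : comp i = comp j -> i = j.
  move=> h; apply: val_inj; apply/eqP; rewrite -(nth_uniq set0 _ _ us); first by rewrite /comp in h; rewrite h.
    by apply: leq_trans (ltn_ord i) ss.
  by apply: leq_trans (ltn_ord j) ss.
have key C1 C2 u v : C1 \in components e S -> C2 \in components e S ->
  u \in C1 -> v \in C2 -> u \notin S -> v \notin S -> (u == v) || e u v -> C1 = C2.
  move=> h1 h2 hu hv hus hvs /orP[/eqP huv|euv].
    by apply: (comp_same h1 h2 hu hv); rewrite huv connect0.
  by apply: (comp_same h1 h2 hu hv); apply: connect1; rewrite /del_rel /= hus hvs.
pose f (a : 'I_2 + 'I_k) := match a with inl a => if (a : nat) == 0 then x else y | inr i => rep i end.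
have xy : x != y by apply/eqP => h; rewrite h eirr in exy.
have fa a : exists2 C, C \in components e S & (f a \in C) && (f a \notin S) && 
   (if a is inr i then C == comp i else C == Cx).
  case: a => [a|i] /=.
    by exists Cx => //; case: ifP => _; rewrite ?hx ?hy ?xCx ?yCx eqxx.
  by exists (comp i); rewrite ?repP ?eqxx.
have H a b : (f a == f b) || e (f a) (f b) ->
  match a, b with inr i, inr j => i = j | inl _, inl _ => True | _, _ => False end.
  move=> hab; have [Ca hCa /andP[/andP[ha ha'] hCa']] := fa a.
  have [Cb hCb /andP[/andP[hb hb'] hCb']] := fa b.
  have eC := key _ _ _ _ hCa hCb ha hb ha' hb' hab.
  move: hCa' hCb'; rewrite eC.
  case: a {ha ha' hab} => [a|i]; case: b {hb hb'} => [b|j] //= /eqP -> /eqP h.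
  - by move: (compNx j); rewrite h eqxx.
  - by move: (compNx i); rewrite h eqxx.
  - exact: compinj.
have I2 (a : 'I_2) : ((a : nat) == 0) || ((a : nat) == 1) by case: a => [[|[|]]].
exists f; split.
  move=> a b hab; have := H a b; rewrite hab eqxx /= => /(_ isT).
  case: a b hab => [a|i] [b|j] //= hab; last by move->.
  move=> _.
  congr inl; apply: ord_inj; move: hab.
  by case/orP: (I2 a) => /eqP ->; case/orP: (I2 b) => /eqP -> //= h; move: xy; rewrite h eqxx.
move=> a b; case: a b => [a|i] [b|j] /=.
- apply/idP/idP.
    by apply: contraTneq => ->; rewrite eirr.
  move=> hab; case/orP: (I2 a) => /eqP ha; case/orP: (I2 b) => /eqP hb;
    rewrite ha hb //=; try by rewrite (esym y x).
  + have hh : a = b by apply: ord_inj; rewrite ha hb.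
    by move: hab; rewrite hh eqxx.
  + have hh : a = b by apply: ord_inj; rewrite ha hb.
    by move: hab; rewrite hh eqxx.
- by apply/negbTE/negP => h; have := H (inl a) (inr j); rewrite /= h orbT => /(_ isT).
- by apply/negbTE/negP => h; have := H (inr i) (inl b); rewrite /= h orbT => /(_ isT).
- apply/negbTE/negP => h; have := H (inr i) (inr j); rewrite /= h orbT => /(_ isT) hij.
  by move: h; rewrite hij eirr.
Qed.

Lemma indep_edge (I : {set T}) x y : independent e I -> x \in I -> y \in I -> e x y = false.
Proof.
move=> /forallP/(_ x)/implyP hI hx hy.
by move: (hI hx) => /forallP/(_ y)/implyP/(_ hy)/negbTE.
Qed.

Lemma ncomp_indep (I : {set T}) : independent e I -> ncomp e (~: I) = #|I|.
Proof.
move=> hI; rewrite /ncomp /components setCK.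
have -> : [set [set y | connect (del_rel e (~: I)) x y] | x in I] = [set [set x] | x in I].
  apply: eq_in_imset => x hx; apply/setP => y; rewrite !inE.
  apply/idP/idP; last by move/eqP ->; rewrite connect0.
  case/connectP => [[|z p]] //=; first by move=> _ ->.
  rewrite /del_rel /= !inE !negbK => /andP[/and3P[hx1 hz]]; by rewrite (indep_edge hI hx1 hz).
by rewrite card_imset //; exact: set1_inj.
Qed.

Lemma indep_le_alpha (I : {set T}) : independent e I -> #|I| <= alpha e.
Proof. by move=> hI; rewrite /alpha; apply: leq_bigmax_cond. Qed.

Lemma alpha_attained : exists2 I : {set T}, independent e I & alpha e = #|I|.
Proof.
have h0 : 0 < #|independent e|.
  apply/card_gt0P; exists set0; rewrite unfold_in /independent.
  by apply/forallP => x; rewrite inE.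
have [I hI h] := eq_bigmax_cond (fun A : {set T} => #|A|) h0.
by exists I => //; exact: h.
Qed.

Lemma ncomp_le (S : {set T}) : ncomp e S <= #|~: S|.
Proof. exact: leq_imset_card. Qed.

End G.

Open Scope ring_scope.

Lemma big_omin_P (P : rat -> bool) (hP : forall x y, P (Num.min x y) = P x && P y)
  (I : Type) (r : seq I) (p : pred I) (F : I -> rat) :
  (match \big[omin/None]_(i <- r | p i) Some (F i) with None => True | Some t => P t end)
  <-> all (fun i => p i ==> P (F i)) r.
Proof.
have E : (match \big[omin/None]_(i <- r | p i) Some (F i) with None => true | Some t => P t end)
  = all (fun i => p i ==> P (F i)) r.
  elim: r => [|x r IH]; first by rewrite big_nil.
  rewrite big_cons /=; case: (p x) => //=.
  by move: IH; case: (\big[omin/None]_(i <- r | p i) Some (F i)) => [t|] /= <-; rewrite ?hP ?andbT.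
rewrite -E; case: (\big[omin/None]_(i <- r | p i) Some (F i)) => //.
Qed.

Lemma one_tough_iff (T : finType) (e : rel T) :
  one_tough e <-> forall S : {set T}, (2 <= ncomp e S)%N -> (ncomp e S <= #|S|)%N.
Proof.
apply: iff_trans (big_omin_P (P := fun t : rat => 1 <= t) _ _ _ _) _.
  by move=> x y; rewrite le_min.
split => [/allP H S hS | H].
  have := H S (mem_index_enum _); rewrite hS /=.
  by rewrite ler_pdivlMr ?ltr0n ?(leq_trans _ hS) // mul1r ler_nat.
apply/allP => S _; apply/implyP => hS.
by rewrite ler_pdivlMr ?ltr0n ?(leq_trans _ hS) // mul1r ler_nat H.
Qed.

Lemma tough_gt1_iff (T : finType) (e : rel T) :
  tough_gt1 e <-> forall S : {set T}, (2 <= ncomp e S)%N -> (ncomp e S < #|S|)%N.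
Proof.
apply: iff_trans (big_omin_P (P := fun t : rat => 1 < t) _ _ _ _) _.
  by move=> x y; rewrite lt_min.
split => [/allP H S hS | H].
  have := H S (mem_index_enum _); rewrite hS /=.
  by rewrite ltr_pdivlMr ?ltr0n ?(leq_trans _ hS) // mul1r ltr_nat.
apply/allP => S _; apply/implyP => hS.
by rewrite ltr_pdivlMr ?ltr0n ?(leq_trans _ hS) // mul1r ltr_nat H.
Qed.

Lemma half_le (a n : nat) : ((a%:R : rat) <= n%:R / 2%:R) = (a * 2 <= n)%N.
Proof. by rewrite ler_pdivlMr ?ltr0n // -natrM ler_nat. Qed.
Lemma half_lt (a n : nat) : ((a%:R : rat) < n%:R / 2%:R) = (a * 2 < n)%N.
Proof. by rewrite ltr_pdivlMr ?ltr0n // -natrM ltr_nat. Qed.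


Close Scope ring_scope.
Theorem mainTheorem4 (T : finType) (e : rel T)
  (esym : symmetric e) (eirr : irreflexive e) (k : nat) (hk : 2 <= k) :
  (k_connected e k -> induced_free e (K2_kK1_rel k) ->
     ((alpha e)%:R <= (#|T|%:R : rat) / 2%:R)%R <-> one_tough e)
  /\
  (k_connected e k.+1 -> induced_free e (K2_kK1_rel k) ->
     ((alpha e)%:R < (#|T|%:R : rat) / 2%:R)%R <-> tough_gt1 e).
Proof.
have [I hI hal] := alpha_attained e.
have hC := cardsC I.
have indC (S : {set T}) : induced_free e (K2_kK1_rel k) -> (k < ncomp e S)%N ->
    (#|~: S| <= alpha e)%N.
  move=> hf hc; apply: indep_le_alpha; apply/forallP => x; apply/implyP => hx.
  apply/forallP => y; apply/implyP => hy.
  by rewrite (no_edge esym eirr hf hc) // -in_setC.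
have hS0 (S : {set T}) := cardsC S.
split => [[hn hcon] hf | [hn hcon] hf].
  rewrite half_le one_tough_iff; split => [ha S h2 | H].
    rewrite leqNgt; apply/negP => hlt.
    have hkS : (k <= #|S|)%N.
      by rewrite leqNgt; apply/negP => /hcon h1; move: h2; rewrite h1.
    have := indC S hf (leq_ltn_trans hkS hlt).
    have := ncomp_le e S; have := hS0 S; lia.
  rewrite hal; case: (leqP 2 #|I|) => h2.
    have := H (~: I); rewrite ncomp_indep // => /(_ h2).
    lia.
  lia.
rewrite half_lt tough_gt1_iff; split => [ha S h2 | H].
  rewrite ltnNge; apply/negP => hle.
  have hkS : (k.+1 <= #|S|)%N.
    by rewrite leqNgt; apply/negP => /hcon h1; move: h2; rewrite h1.
  have := indC S hf (leq_trans hkS hle).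
  have := ncomp_le e S; have := hS0 S; lia.
rewrite hal; case: (leqP 2 #|I|) => h2.
  have := H (~: I); rewrite ncomp_indep // => /(_ h2).
  lia.
lia.
Qed.
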